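(* Let $r\ge 2$ and $n\ge 3$. Let $W_n$ be the word over $\{H,v\}$ obtained from the Christoffel word of $\mathcal{C}_n$ by replacing every $E$ with $H$ and every $N$ with $v$ (this is the word encoding the pair consisting of all horizontal edges and no vertical edges of $\mathcal{C}_n$). Then $$w_q(W_n)=c_{n-1}+c_{n-2}-1.$$
   Context: Fix an integer $r\ge 2$. Define $c_1=0$, $c_2=1$, $c_n=rc_{n-1}-c_{n-2}$ for $n\ge 3$. For nonnegative integers $a,b$, the maximal Dyck path $\mathcal{P}(a,b)$ is the lattice path from $(0,0)$ to $(a,b)$ using unit north and east steps that never passes strictly above the line segment from $(0,0)$ to $(a,b)$ and is closest to that segment. For $n\ge 3$ let $\mathcal{C}_n=\mathcal{P}(c_{n-1},c_{n-2})$; its Christoffel word is the word over $\{E,N\}$ recording its steps in order ($E$ for east, $N$ for north). On the alphabet $A=\{h,v,H,V\}$ define $w_q$ on two-letter words by $w_q(hv)=w_q(Hv)=w_q(hV)=1$, $w_q(Hh)=w_q(vV)=r$, $w_q(VH)=r^2-1$, and $w_q(yx)=-w_q(xy)$ for all $x,y\in A$ (so $w_q(xx)=0$). For a word $W=W_1W_2\cdots W_\ell$ over $A$, set $w_q(W)=\sum_{1\le i<j\le \ell}w_q(W_iW_j)$. *)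

(* Defs.v *)
From mathcomp Require Import all_boot all_order all_algebra.
Set Implicit Arguments. Unset Strict Implicit. Unset Printing Implicit Defensive.
Import GRing.Theory Num.Theory.
Local Open Scope ring_scope.

(* The sequence c_n (indexed from 1; c 0 is an unused dummy value):
   c_1 = 0, c_2 = 1, c_n = r c_{n-1} - c_{n-2}. *)
Fixpoint cpair (r : int) (n : nat) : int * int :=
  (* cpair r n = (c_{n+1}, c_{n+2}) *)
  match n with
  | 0%N => (0, 1)
  | m.+1 => let p := cpair r m in (p.2, r * p.2 - p.1)
  end.
Definition cseq (r : int) (n : nat) : int := (cpair r n.-1).1.

Inductive step := E | N.
Definition step_eqb (x y : step) : bool :=
  match x, y with E, E | N, N => true | _, _ => false end.
Definition isE (s : step) : bool := if s is E then true else false.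
Definition isN (s : step) : bool := if s is N then true else false.

Definition dyck_below (a b : nat) (w : seq step) : Prop :=
  count isE w = a /\ count isN w = b /\
  forall k : nat, (count isN (take k w) * a <= count isE (take k w) * b)%N.

Definition maximal_dyck (a b : nat) (w : seq step) : Prop :=
  dyck_below a b w /\
  forall w' : seq step, dyck_below a b w' ->
    forall k : nat, (count isN (take k w') <= count isN (take k w))%N.

Inductive letter := lh | lv | lH | lV.

Definition wq2 (r : int) (x y : letter) : int :=
  match x, y with
  | lh, lv => 1 | lv, lh => -1
  | lH, lv => 1 | lv, lH => -1
  | lh, lV => 1 | lV, lh => -1
  | lH, lh => r | lh, lH => - r
  | lv, lV => r | lV, lv => - r
  | lV, lH => r ^+ 2 - 1 | lH, lV => - (r ^+ 2 - 1)
  | _, _ => 0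
  end.

Definition wq (r : int) (W : seq letter) : int :=
  \sum_(0 <= j < size W) \sum_(0 <= i < j) wq2 r (nth lh W i) (nth lh W j).

Definition HvOfStep (s : step) : letter := if s is E then lH else lv.

(* Main.v *)
Require Import Defs.
From mathcomp Require Import all_boot all_order all_algebra.
From mathcomp Require Import zify ring.
Import Order.TTheory GRing.Theory Num.Theory.
Local Open Scope ring_scope.

Lemma cpair_inv r k : let p := cpair r k in p.1^+2 - r * p.1 * p.2 + p.2^+2 = 1.
Proof.
elim: k => [|k IH] /=; first by ring.
rewrite -IH /=; ring.
Qed.

Lemma cpair_mono r k : 2 <= r -> 0 <= (cpair r k).1 /\ (cpair r k).1 <= (cpair r k).2.
Proof.
move=> hr; elim: k => [|k [IH1 IH2]] /=; first by [].
split; nia.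
Qed.

Local Open Scope nat_scope.

Lemma pairY m b j : coprime b m -> 0 < j < m ->
  (j * b) %/ m + ((m - j) * b) %/ m = b - 1.
Proof.
move=> cop /andP [j0 jm].
have m0 : 0 < m by lia.
have ndv : ~~ (m %| j * b).
  rewrite Gauss_dvdl; last by rewrite coprime_sym.
  apply/negP => /dvdn_leq; lia.
have rr0 : 0 < (j * b) %% m by rewrite lt0n; move: ndv; rewrite /dvdn.
have rrm : (j * b) %% m < m by rewrite ltn_mod.
have E1 := divn_eq (j * b) m.
set q := (j * b) %/ m in E1 *. set rr := (j * b) %% m in E1 rr0 rrm *.
have qb : q < b.
  have : q * m < b * m by nia.
  by rewrite ltn_pmul2r.
have E2 : (m - j) * b = (b - q - 1) * m + (m - rr) by nia.
rewrite E2 divnMDl // divn_small; lia.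
Qed.

Lemma sumY m b : coprime b m -> 0 < m ->
  2 * (\sum_(0 <= j < m) (j * b) %/ m) = (m - 1) * (b - 1).
Proof.
move=> cop m0.
set Y := fun j => (j * b) %/ m.
have Ym : Y m = b.
  by rewrite /Y /= mulKn.
have Y0 : Y 0 = 0 by rewrite /Y mul0n div0n.
have H1 : \sum_(0 <= j < m) Y j + b = \sum_(0 <= j < m) Y j.+1.
  by rewrite -Ym -big_nat_recr //= big_nat_recl //= Y0 add0n.
have H2 : \sum_(0 <= j < m) Y j.+1 = \sum_(0 <= j < m) Y (m - j).
  rewrite big_nat_rev /=; apply: eq_big_nat => i /andP [_ im].
  congr Y; lia.
have H3 : \sum_(0 <= j < m) (Y j + Y (m - j)) = b + (m - 1) * (b - 1).
  rewrite big_ltn // Y0 subn0 Ym add0n.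
  rewrite (eq_big_nat _ _ (F2 := fun _ => b - 1)) ?sum_nat_const_nat //.
  by move=> i /andP [i1 im]; apply: pairY => //; rewrite i1.
rewrite big_split /= in H3.
rewrite -[LHS]/(2 * \sum_(0 <= j < m) Y j).
lia.
Qed.

Local Open Scope ring_scope.

Lemma wq_rcons r W x : wq r (rcons W x) =
  wq r W + \sum_(0 <= i < size W) wq2 r (nth lh W i) x.
Proof.
rewrite /wq size_rcons big_nat_recr //= nth_rcons ltnn eqxx; congr (_ + _).
  apply: eq_big_nat => j /andP [_ jW]; rewrite nth_rcons jW.
  by apply: eq_big_nat => i /andP [_ ij]; rewrite nth_rcons (ltn_trans ij jW).
by apply: eq_big_nat => i /andP [_ iW]; rewrite nth_rcons iW.
Qed.

Lemma sum_wq2 r (w : seq step) x :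
  \sum_(0 <= i < size (map HvOfStep w)) wq2 r (nth lh (map HvOfStep w) i) (HvOfStep x)
  = if x is N then (count isE w)%:Z else - (count isN w)%:Z.
Proof.
rewrite -(big_nth lh xpredT (fun y => wq2 r y (HvOfStep x))) big_map.
elim: w => [|s w IH]; first by rewrite big_nil; case: x.
rewrite big_cons IH; case: s; move: IH; case: x => /= _; lia.
Qed.

Local Open Scope nat_scope.

Lemma count_EN (w : seq step) : count isE w + count isN w = size w.
Proof. by elim: w => [|[] w IH] //=; rewrite -IH; lia. Qed.

Definition Yf m b k := (k * b) %/ m.
Definition stp m b j := if Yf m b j < Yf m b j.+1 then N else E.
Definition w0 m b := map (stp m b) (iota 0 m).

Lemma Yf_step m b k : 0 < m -> b <= m -> Yf m b k <= Yf m b k.+1 <= (Yf m b k).+1.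
Proof.
move=> m0 bm; rewrite /Yf; apply/andP; split.
  by apply: leq_div2r; rewrite leq_mul2r leqnSn orbT.
rewrite mulSn addnC.
apply: leq_trans (_ : (k * b + m) %/ m <= _).
  by apply: leq_div2r; rewrite leq_add2l.
have -> : k * b + m = 1 * m + k * b by lia.
by rewrite divnMDl // add1n.
Qed.

Lemma count_w0 m b k : 0 < m -> b <= m ->
  count isN (map (stp m b) (iota 0 k)) = Yf m b k.
Proof.
move=> m0 bm; elim: k => [|k IH]; first by rewrite /Yf mul0n div0n.
rewrite -addn1 iotaD map_cat count_cat IH /= add0n addn0 addn1.
have := @Yf_step m b k m0 bm; rewrite /stp; case: ltnP => /= h; lia.
Qed.

Lemma take_w0 m b k : take k (w0 m b) = map (stp m b) (iota 0 (minn k m)).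
Proof. by rewrite /w0 -map_take take_iota. Qed.

Lemma size_w0 m b : size (w0 m b) = m.
Proof. by rewrite /w0 size_map size_iota. Qed.

Lemma YfmK m b : 0 < m -> Yf m b m = b.
Proof. by move=> m0; rewrite /Yf mulKn. Qed.

Lemma dyck_w0 a b : 0 < a + b -> dyck_below a b (w0 (a + b) b).
Proof.
move=> m0; have bm : b <= a + b by rewrite leq_addl.
have HN k : count isN (take k (w0 (a + b) b)) = Yf (a + b) b (minn k (a + b)).
  by rewrite take_w0 count_w0.
have HE k : count isE (take k (w0 (a + b) b)) = minn k (a + b) - Yf (a + b) b (minn k (a + b)).
  have := count_EN (take k (w0 (a + b) b)); rewrite size_take size_w0 HN.
  rewrite /minn; case: ltnP => _; lia.
have HN0 : count isN (w0 (a + b) b) = b.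
  by rewrite -(take_size (w0 (a+b) b)) HN size_w0 minnn YfmK.
split; last split => //.
  have := count_EN (w0 (a + b) b); rewrite size_w0 HN0; lia.
move=> k; rewrite HN HE.
set t := minn k (a + b).
have h1 : Yf (a + b) b t * (a + b) <= t * b by rewrite /Yf leq_trunc_div.
have h2 : Yf (a + b) b t <= t.
  by rewrite /Yf; apply: leq_trans (leq_div2r _ (leq_mul (leqnn t) bm)) _; rewrite mulnK.
move: h1; rewrite mulnBl mulnDr; lia.
Qed.

Lemma dyck_bound a b w k : 0 < a + b -> dyck_below a b w ->
  count isN (take k w) <= Yf (a + b) b (minn k (a + b)).
Proof.
move=> m0 [hE [hN hk]].
have sw : size w = a + b by rewrite -count_EN hE hN.
have := hk k; have := count_EN (take k w); rewrite size_take sw.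
move=> hs hd; rewrite /Yf leq_divRL //.
have -> : minn k (a + b) = count isE (take k w) + count isN (take k w).
  by rewrite hs /minn; case: ltnP.
by rewrite mulnDr mulnDl leq_add2r.
Qed.

Lemma max_w0 a b : 0 < a + b -> maximal_dyck a b (w0 (a + b) b).
Proof.
move=> m0; split; first exact: dyck_w0.
move=> w' hw' k; rewrite take_w0 count_w0 ?leq_addl //.
exact: dyck_bound.
Qed.

Lemma max_count a b w k : 0 < a + b -> maximal_dyck a b w ->
  count isN (take k w) = Yf (a + b) b (minn k (a + b)).
Proof.
move=> m0 [hd hm]; apply/eqP; rewrite eqn_leq dyck_bound //=.
have := hm _ (@dyck_w0 a b m0) k; rewrite take_w0 count_w0 ?leq_addl //.
Qed.

Lemma size_max a b w : maximal_dyck a b w -> size w = a + b.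
Proof. by case=> [[hE [hN _]] _]; rewrite -count_EN hE hN. Qed.

Local Open Scope ring_scope.

Lemma wq_prefix r a b w k : (0 < a + b)%N -> maximal_dyck a b w -> (k <= a + b)%N ->
  wq r (map HvOfStep (take k w)) =
  (k%:Z - 1) * (Yf (a + b) b k)%:Z - 2 * (\sum_(0 <= j < k) Yf (a + b) b j)%N%:Z.
Proof.
move=> m0 hw; have sw := @size_max a b w hw.
have cN j : (j <= a + b)%N -> count isN (take j w) = Yf (a + b) b j.
  by move=> hj; rewrite (@max_count a b w j m0 hw) (minn_idPl hj).
elim: k => [|k IH] hk.
  by rewrite take0 /wq /= big_geq // big_geq // /Yf mul0n div0n mulr0 mulr0 subr0.
have hk' : (k < size w)%N by rewrite sw.
have cNk := cN k (ltnW hk). have cNk1 := cN k.+1 hk.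
rewrite (take_nth E hk') -cats1 count_cat /= addn0 cNk in cNk1.
have cEk : count isE (take k w) = (k - Yf (a + b) b k)%N.
  have := count_EN (take k w); rewrite size_take hk' cNk; lia.
rewrite (take_nth E hk') map_rcons wq_rcons sum_wq2 IH ?(ltnW hk) // big_nat_recr //=.
have hYk : (Yf (a + b) b k <= k)%N.
  rewrite -cNk; have := count_EN (take k w); rewrite size_take hk'; lia.
have -> : Posz k.+1 = Posz k + 1 by rewrite -addn1 PoszD.
move: cNk1 cEk; case: (nth E w k) => /= h1 h2; rewrite -h1 ?h2 ?cNk.
  rewrite addn0 PoszD; ring.
rewrite !PoszD -(subzn hYk); ring.
Qed.

Theorem mainTheorem4 (r : int) (n : nat) (hr : 2 <= r) (hn : (3 <= n)%N) :
  (0 <= cseq r n.-1) /\ (0 <= cseq r n.-2) /\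
  (exists w : seq step,
      maximal_dyck `|cseq r n.-1|%N `|cseq r n.-2|%N w) /\
  (forall w : seq step,
      maximal_dyck `|cseq r n.-1|%N `|cseq r n.-2|%N w ->
      wq r (map HvOfStep w) = cseq r n.-1 + cseq r n.-2 - 1).
Proof.
case: n hn => [|[|[|k]]] // _.
rewrite /cseq /=.
have [p1ge p12] := @cpair_mono r k hr.
have hinv := cpair_inv r k.
move: p1ge p12 hinv; rewrite /=; case: (cpair r k) => p1 p2 /= p1ge p12 hinv.
have [b hb] : exists b : nat, p1 = b%:Z by exists `|p1|%N; rewrite gez0_abs.
have [a ha] : exists a : nat, p2 = a%:Z by exists `|p2|%N; rewrite gez0_abs // (le_trans p1ge p12).
have [R hR] : exists R : nat, r = R%:Z by exists `|r|%N; rewrite gez0_abs // (le_trans _ hr).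
subst p1 p2 r => /=.
have H : (b * b + a * a = 1 + R * b * a)%N.
  apply/eqP; rewrite -eqz_nat; apply/eqP; rewrite !PoszD !PoszM.
  move: hinv; rewrite !expr2 => h; have -> : Posz 1 = 1 by []. rewrite -h; ring.
have cop : coprime a b.
  rewrite /coprime -dvdn1.
  have : (gcdn a b %| 1 + R * b * a)%N.
    by rewrite -H dvdn_add // dvdn_mull // ?dvdn_gcdr ?dvdn_gcdl.
  have hX : (gcdn a b %| R * b * a)%N by rewrite dvdn_mull // dvdn_gcdl.
  by rewrite (dvdn_addl 1 hX).
have m0 : (0 < a + b)%N.
  case: (posnP (a + b)) => // /eqP; rewrite addn_eq0 => /andP [/eqP a0 /eqP b0].
  by move: H; rewrite a0 b0 !muln0.
have copb : coprime b (a + b) by rewrite /coprime addnC gcdnDl gcdnC.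
split; first by rewrite (le_trans p1ge p12).
split; first by [].
split; first by exists (w0 (a + b) b); apply: max_w0.
move=> w hw.
have sw := @size_max a b w hw.
rewrite -(take_size w) sw (@wq_prefix R a b w (a + b) m0 hw (leqnn _)) YfmK //.
have hS := @sumY (a + b) b copb m0.
case: b H cop copb hS {p1ge p12 hinv} m0 hw sw => [|b] H cop copb hS m0 hw sw.
  have a1 : a = 1%N by move: H; rewrite !muln0 !add0n; nia.
  subst a; move: hS; rewrite muln0 => /eqP; rewrite muln_eq0 => /= /eqP ->.
  by [].
have -> : 2 * (\sum_(0 <= j < a + b.+1) Yf (a + b.+1) b.+1 j)%N%:Z
        = ((a + b.+1 - 1) * (b.+1 - 1))%N%:Z by rewrite -hS PoszM.
rewrite PoszM -!subzn // ?addn_gt0 ?orbT //; ring.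
Qed.
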